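(* Let $V$ be a real vector space of dimension $2n$ with basis $e_1,\dots,e_{2n}$ and symplectic form $\omega=e_{12}+e_{34}+\dots+e_{2n-1,2n}$ (where $e_{ij}=e_i\wedge e_j$). Then every primitive element $\mu_k\in P\bigwedge^kV$ can be written as $$\mu_k=e_1\wedge\beta_1+e_2\wedge\beta_2+\Big(e_{12}-\tfrac{1}{n-k+1}\sum_{j=2}^n e_{2j-1,2j}\Big)\wedge\beta_3+\beta_4,$$ where $\beta_1,\beta_2\in P\bigwedge^{k-1}V$, $\beta_3\in P\bigwedge^{k-2}V$, $\beta_4\in P\bigwedge^kV$, and none of $\beta_1,\dots,\beta_4$ involves $e_1$ or $e_2$ (i.e. they lie in the exterior algebra of $\mathrm{span}\{e_3,\dots,e_{2n}\}$).
   Context: On $\bigwedge^\bullet V$, $L(\alpha)=\omega\wedge\alpha$, $\Lambda$ is contraction with the bivector $\omega^{-1}$ (adjoint-type operator with $[\Lambda,L]=H$), and $H$ acts on $\bigwedge^kV$ as multiplication by $n-k$. An element $\mu\in\bigwedge^kV$ ($k\le n$) is primitive if $\Lambda\mu=0$; $P\bigwedge^kV$ is the space of primitive elements. The coefficient $\frac{1}{n-k+1}$ is what the paper writes as the operator $\frac{1}{H+1}$ applied to the resulting degree-$k$ element. *)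

(* Defs.v *)
(* Exterior algebra of V = R^(2n) modelled concretely:
   an element of /\^* V is a finite function assigning to each subset S of
   the (0-indexed) basis indices 'I_m the coefficient of e_S
   (e_S = e_{s1} /\ ... /\ e_{sr} with s1 < ... < sr). *)
From HB Require Import structures.
From mathcomp Require Import all_boot all_order all_algebra.
Set Implicit Arguments. Unset Strict Implicit. Unset Printing Implicit Defensive.
Import Order.TTheory GRing.Theory Num.Theory.
Local Open Scope ring_scope.

Definition extform (R : nzRingType) (m : nat) := {ffun {set 'I_m} -> R}.

Section Ext.
Variables (R : nzRingType) (m : nat).

(* sign of e_S /\ e_T = sgn S T * e_(S u T) for disjoint S, T:
   (-1)^(number of inversions s > t with s in S, t in T) *)
Definition wsgn (S T : {set 'I_m}) : R :=
  (-1) ^+ #|[set p : 'I_m * 'I_m | [&& p.1 \in S, p.2 \in T & (p.2 < p.1)%N]]|.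

Definition wedge (a b : extform R m) : extform R m :=
  [ffun U => \sum_(S : {set 'I_m}) \sum_(T : {set 'I_m})
     if (S :|: T == U) && [disjoint S & T] then wsgn S T * a S * b T else 0].

(* basis vector e_i (0-indexed; zero if i >= m) *)
Definition ev (i : nat) : extform R m :=
  [ffun S => ((i < m)%N && (S == [set x : 'I_m | nat_of_ord x == i]))%:R].

(* interior product with the dual basis covector e_i^* (i a 0-indexed nat;
   zero if i >= m):  iota_i (e_i /\ e_U) = e_U  for i not in U *)
Definition contr (i : nat) (a : extform R m) : extform R m :=
  [ffun U : {set 'I_m} =>
     let I := [set x : 'I_m | nat_of_ord x == i] in
     if (i < m)%N && ~~ (I \subset U) then
       (-1) ^+ #|[set s in U | (s < i)%N]| * a (I :|: U)
     else 0].

Definition scal (c : R) (a : extform R m) : extform R m := [ffun S => c * a S].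

(* a is homogeneous of degree d (d an integer; negative degree forces a = 0) *)
Definition homog (d : int) (a : extform R m) : Prop :=
  forall S : {set 'I_m}, (#|S|%:Z != d) -> a S = 0.

(* a does not involve e_1, e_2 (0-indexed: e_0, e_1), i.e. a lies in the
   exterior algebra of span{e_3,...,e_2n} *)
Definition avoids12 (a : extform R m) : Prop :=
  forall S : {set 'I_m}, [exists x in S, (nat_of_ord x < 2)%N] -> a S = 0.

End Ext.

Section Sympl.
Variables (R : nzRingType) (n : nat).

Definition e2 (i j : nat) : extform R n.*2 := wedge (ev R n.*2 i) (ev R n.*2 j).

Definition omega : extform R n.*2 := \sum_(j < n) e2 (j.*2) (j.*2).+1.

Definition Lop (a : extform R n.*2) : extform R n.*2 := wedge omega a.

(* Lambda = contraction with the bivector omega^{-1}, the adjoint of L: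
   Lambda = sum_j iota_{2j} iota_{2j-1} (1-indexed; iota_{2j} applied last); one has [Lambda, L] = H
   with H = n - k on degree k. *)
Definition Lam (a : extform R n.*2) : extform R n.*2 :=
  \sum_(j < n) contr (j.*2).+1 (contr j.*2 a).

Definition primitive (k : int) (a : extform R n.*2) : Prop :=
  homog k a /\ Lam a = 0.

End Sympl.

(* Main.v *)
Require Import Defs.
From HB Require Import structures.
From mathcomp Require Import all_boot all_order all_algebra.
From mathcomp Require Import reals.
From mathcomp Require Import zify ring lra.
Set Implicit Arguments. Unset Strict Implicit. Unset Printing Implicit Defensive.
Import GRing.Theory Num.Theory.
Local Open Scope ring_scope.

Section Pf.
Variables (R : realType) (n : nat).
Local Notation form := (extform R n.*2).
Implicit Types (a b : form) (E F S T U W : {set 'I_(n.*2)}).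

Definition chi E : form := [ffun S => (S == E)%:R].

Lemma ffunDE a b S : (a + b) S = a S + b S. Proof. by rewrite !ffunE. Qed.
Lemma ffunBE a b S : (a - b) S = a S - b S. Proof. by rewrite !ffunE. Qed.
Lemma ffunNE a S : (- a) S = - a S. Proof. by rewrite !ffunE. Qed.

Lemma setUDS E U : E \subset U -> E :|: (U :\: E) = U.
Proof. by move=> h; rewrite setDE setUIr setUCr setIT; apply/setUidPr. Qed.

Lemma wedge_chi E a U : wedge (chi E) a U =
  if E \subset U then wsgn R E (U :\: E) * a (U :\: E) else 0.
Proof.
rewrite ffunE (bigD1 E) //= [X in _ + X]big1 ?addr0 => [|S SE]; last first.
  by apply: big1 => T _; rewrite ffunE (negbTE SE) mulr0 mul0r; case: ifP.
rewrite [chi E E]ffunE eqxx.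
under eq_bigr => T _ do rewrite mulr1.
case: ifP => EU.
  rewrite (bigD1 (U :\: E)) //= [X in _ + X]big1 ?addr0 => [|T TU].
    by rewrite setUDS // eqxx -setI_eq0 setDE setICA setICr setI0 eqxx.
  case: ifP => // /andP[/eqP eU dj]; case/eqP: TU; rewrite -eU setDUl setDv set0U.
  by apply/esym/setDidPl; rewrite disjoint_sym.
apply: big1 => T _; case: ifP => // /andP[/eqP eU _].
by move: EU; rewrite -eU subsetUl.
Qed.


Lemma ev_chi i (hi : (i < n.*2)%N) : ev R n.*2 i = chi [set Ordinal hi].
Proof. by apply/ffunP => S; rewrite !ffunE hi /=; congr (_%:R); congr (_ == _); apply/setP => x; rewrite !inE -val_eqE. Qed.

Lemma Is1 i (hi : (i < n.*2)%N) : [set x : 'I_(n.*2) | nat_of_ord x == i] = [set Ordinal hi].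
Proof. by apply/setP => x; rewrite !inE -val_eqE. Qed.

Lemma wsgn1 E T : (forall s t, s \in E -> t \in T -> ~~ (t < s)%N) -> wsgn R E T = 1.
Proof.
move=> H; rewrite /wsgn (_ : [set p | _] = set0) ?cards0 ?expr0 //.
apply/setP=> -[s t]; rewrite !inE /=; apply/negP => /and3P[hs ht hlt].
by move: (H _ _ hs ht); rewrite hlt.
Qed.

Lemma disj2 (x y : 'I_(n.*2)) W : [disjoint [set x; y] & W] = (x \notin W) && (y \notin W).
Proof.
apply/pred0P/andP => [h|[ha hb] z /=].
  by split; apply/negP => hW; [move: (h x)|move: (h y)]; rewrite /= !inE eqxx ?orbT hW.
rewrite !inE; apply/negP => /andP[/orP[]/eqP -> hz]; by [rewrite hz in ha|rewrite hz in hb].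
Qed.

Lemma sub2 (x y : 'I_(n.*2)) W : ([set x; y] \subset W) = (x \in W) && (y \in W).
Proof. by rewrite subUset !sub1set. Qed.

Lemma e2_chi i j (hi : (i < n.*2)%N) (hj : (j < n.*2)%N) : (i < j)%N ->
  e2 R n i j = chi [set Ordinal hi; Ordinal hj].
Proof.
move=> ij; apply/ffunP => U; rewrite /e2 (ev_chi hi) (ev_chi hj) wedge_chi !ffunE.
set oi := Ordinal hi; set oj := Ordinal hj.
have ne : oi != oj by rewrite -val_eqE /= neq_ltn ij.
case: (boolP (U == [set oi; oj])) => [/eqP ->|hU].
  rewrite sub1set setU11 setU1K ?in_set1 // eqxx mulr1 wsgn1 // => s t.
  by rewrite !in_set1 => /eqP -> /eqP ->; rewrite /= -leqNgt ltnW.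
case: ifP => // h; rewrite (_ : (U :\: [set oi] == [set oj]) = false) ?mulr0 //.
apply/negbTE; apply: contra hU => /eqP e.
by rewrite -(setD1K (_ : oi \in U)) ?e // -sub1set.
Qed.

Definition Pp (j : nat) : {set 'I_(n.*2)} := [set x : 'I_(n.*2) | ((x : nat)./2 == j)%N].

Lemma lt2 i : (i < n)%N -> (i.*2 < n.*2)%N. Proof. by rewrite ltn_double. Qed.
Lemma lt2S i : (i < n)%N -> (i.*2.+1 < n.*2)%N. Proof. by rewrite ltn_Sdouble. Qed.

Lemma Pp2 j (hj : (j < n)%N) : Pp j = [set Ordinal (lt2 hj); Ordinal (lt2S hj)].
Proof.
apply/setP=> x; rewrite !inE -!val_eqE /=; apply/eqP/orP => [<-|].
  by have := odd_double_half x; case: (odd x) => /= e; [right|left]; rewrite -{1}e ?add1n ?add0n.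
by case=> /eqP -> /=; rewrite ?uphalf_double ?doubleK.
Qed.

Lemma contr2 a W j (hj : (j < n)%N) :
  contr (j.*2).+1 (contr j.*2 a) W = if [disjoint Pp j & W] then a (Pp j :|: W) else 0.
Proof.
rewrite /contr !ffunE. cbv zeta beta.
rewrite (lt2 hj) (lt2S hj) (Is1 (lt2 hj)) (Is1 (lt2S hj)) !sub1set (Pp2 hj) disj2.
set o0 := Ordinal (lt2 hj); set o1 := Ordinal (lt2S hj).
have ne : o0 != o1 by rewrite -val_eqE /= neq_ltn ltnSn.
case: (boolP (o1 \in W)) => h1W /=; first by rewrite andbF.
rewrite andbT in_setU1 (negbTE ne) /=.
case: (boolP (o0 \in W)) => h0W /=; first by rewrite mulr0.
rewrite -setUA mulrA (_ : [set s in W | (s < j.*2.+1)%N] = [set s in o1 |: W | (s < j.*2)%N]).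
  by rewrite -expr2 sqrr_sign mul1r.
apply/setP => x; rewrite !inE; case: (boolP (x \in W)) => xW /=.
  have : x != o0 by apply: contraNneq h0W => <-.
  by rewrite orbT -val_eqE /= => xne; rewrite ltnS leq_eqVlt (negbTE xne).
by rewrite orbF; case: eqP => [->|] //=; rewrite ltnNge leqnSn.
Qed.

Lemma LamE a W : Lam a W = \sum_(j < n) (if [disjoint Pp j & W] then a (Pp j :|: W) else 0).
Proof. by rewrite sum_ffunE; apply: eq_bigr => j _; apply: contr2. Qed.


Section Gen.
Variable T : finType.
Implicit Types A B C D : {set T}.

Lemma disjUr A B C : [disjoint A & B :|: C] = [disjoint A & B] && [disjoint A & C].
Proof.
apply/pred0P/andP => [h|[h1 h2] x /=].
  split; apply/pred0P => x /=; move: (h x) => /=; rewrite !inE;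
    by case: (x \in A); case: (x \in B); case: (x \in C).
move/pred0P: h1 => /(_ x) /=; move/pred0P: h2 => /(_ x) /=; rewrite !inE.
by case: (x \in A); case: (x \in B); case: (x \in C).
Qed.

Lemma disjP A B : [disjoint A & B] -> forall x, x \in A -> x \in B -> False.
Proof. by move=> /pred0P h x xA xB; move: (h x); rewrite /= xA xB. Qed.

Lemma disjSr A B D : [disjoint A & B] -> (A \subset B :|: D) = (A \subset D).
Proof.
move=> d; apply/subsetP/subsetP => h x xA; last by rewrite inE h ?orbT.
by move: (h x xA); rewrite inE; case/orP => // xB; case: (disjP d xA xB).
Qed.

Lemma disjDU A B D : [disjoint A & B] -> (B :|: D) :\: A = B :|: (D :\: A).
Proof.
move=> d; apply/setP => x; rewrite !inE; case: (boolP (x \in A)) => xA /=.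
  by rewrite orbF; case: (boolP (x \in B)) => // xB; case: (disjP d xA xB).
by [].
Qed.

Lemma disjD A B D : [disjoint A & B] -> [disjoint B & D :\: A] = [disjoint B & D].
Proof.
move=> d; apply/pred0P/pred0P => h x /=; move: (h x) => /=; rewrite !inE;
  case: (boolP (x \in A)) => xA; case: (boolP (x \in B)) => xB //=.
by case: (disjP d xA xB).
Qed.

Lemma UDK A D : [disjoint A & D] -> (A :|: D) :\: A = D.
Proof. by move=> d; rewrite setDUl setDv set0U; apply/setDidPl; rewrite disjoint_sym. Qed.

Lemma disjDself A D : [disjoint A & D :\: A].
Proof. by apply/pred0P => x /=; rewrite !inE; case: (x \in A). Qed.

End Gen.

Hypothesis n_gt0 : (0 < n)%N.
Local Notation o0 := (Ordinal (lt2 n_gt0)).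
Local Notation o1 := (Ordinal (lt2S n_gt0)).
Local Notation j0 := (Ordinal n_gt0).
Local Notation P0 := (Pp 0).

Definition av S := ~~ [exists x in S, (nat_of_ord x < 2)%N].

Lemma avE S : av S = (o0 \notin S) && (o1 \notin S).
Proof.
rewrite /av -negb_or; congr (~~ _).
apply/existsP/orP => [[x /andP[xS x2]]|[h|h]]; last 2 first.
- by exists o0; rewrite h.
- by exists o1; rewrite h.
case: x xS x2 => [[|[|k]] hk] xS //= _.
  by left; rewrite (_ : o0 = Ordinal hk) //; apply/val_inj.
by right; rewrite (_ : o1 = Ordinal hk) //; apply/val_inj.
Qed.

Lemma P0E : P0 = [set o0; o1]. Proof. exact: Pp2. Qed.

Lemma notin_Pp j (x : 'I_(n.*2)) : (x < 2)%N -> j != 0%N -> x \notin Pp j.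
Proof. by rewrite inE; case: x => [[|[|k]] hk] //= _; rewrite eq_sym. Qed.

Lemma avU j W : (j < n)%N -> j != 0%N -> av (Pp j :|: W) = av W.
Proof. by move=> hj nj; rewrite !avE !in_setU (negbTE (@notin_Pp j o0 isT nj)) (negbTE (@notin_Pp j o1 isT nj)). Qed.

Lemma avUr A W : av (A :|: W) -> av W.
Proof. by rewrite !avE !in_setU !negb_or => /andP[/andP[_ ->] /andP[_ ->]]. Qed.

Lemma disjPp i j : i != j -> [disjoint Pp i & Pp j].
Proof.
move=> ij; apply/pred0P => x /=; rewrite !inE; apply/negP => /andP[/eqP e1 /eqP e2].
by move: ij; rewrite -e1 -e2 eqxx.
Qed.

Lemma avP0 W : ~~ av (P0 :|: W).
Proof. by rewrite avE P0E !in_setU !in_set1 !eqxx. Qed.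

Definition restr F a : form := [ffun U => if av U then a (F :|: U) else 0].

Lemma LamR F a W : F \subset P0 ->
  Lam (restr F a) W = if av W then Lam a (F :|: W) -
     (if [disjoint P0 & F :|: W] then a (P0 :|: (F :|: W)) else 0) else 0.
Proof.
move=> FP; rewrite !LamE; case: ifP => hW; last first.
  apply: big1 => j _; case: ifP => // _; rewrite ffunE; case: ifP => // h.
  by move: hW; rewrite (avUr h).
rewrite (bigD1 j0) //= [in RHS](bigD1 j0) //= ffunE (negbTE (avP0 _)) if_same add0r.
rewrite [X in X - _]addrC addrK; apply: eq_bigr => j nj.
have nj0 : (nat_of_ord j) != 0%N by [].
rewrite ffunE (avU _ (ltn_ord j) nj0) hW disjUr setUCA.
rewrite (_ : [disjoint Pp j & F] = true) //.
by apply: disjointWr FP _; apply: disjPp.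
Qed.


Lemma ndisj (A B : {set 'I_(n.*2)}) x : x \in A -> x \in B -> [disjoint A & B] = false.
Proof. by move=> xA xB; apply/negbTE/negP => d; apply: (disjP d xA xB). Qed.

Lemma inP0 (x : 'I_(n.*2)) : (x \in P0) = (x < 2)%N.
Proof. by rewrite inE -[2%N]/(1.*2) -ltn_half_double ltnS leqn0. Qed.

Lemma av_disj W : av W -> [disjoint P0 & W].
Proof. by rewrite avE P0E disj2. Qed.

Lemma avoids_restr F a : avoids12 (restr F a).
Proof. by move=> S h; rewrite ffunE; case: ifP => // /negP []. Qed.

Lemma homog_restr F a (d e : int) : homog d a -> F \subset P0 -> d = e + #|F|%:Z ->
  homog e (restr F a).
Proof.
move=> ha FP de S hS; rewrite ffunE; case: ifP => // hav; apply: ha.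
have dj : [disjoint F & S] by apply: disjointWl FP (av_disj hav).
rewrite cardsU (_ : F :&: S = set0) ?cards0 ?subn0; last by apply/eqP; rewrite setI_eq0.
apply: contra hS => /eqP h; apply/eqP; move: h; rewrite de; lia.
Qed.

Lemma Lam_restr F a x : Lam a = 0 -> x \in F -> F \subset P0 -> Lam (restr F a) = 0.
Proof.
move=> La xF FP; apply/ffunP => W; rewrite LamR // La ffunE [RHS]ffunE.
have xP : x \in P0 by move/subsetP: FP; apply.
by case: ifP => // _; rewrite (ndisj xP) ?subr0 // inE xF.
Qed.

Lemma Lam_restr0 a W : Lam a = 0 -> Lam (restr set0 a) W = - restr P0 a W.
Proof.
move=> La; rewrite LamR ?sub0set // La ffunE set0U ffunE.
by case: ifP => [h|]; rewrite ?oppr0 // av_disj // sub0r.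
Qed.


Lemma wedgeBl x y b : wedge (x - y) b = wedge x b - wedge y b.
Proof.
apply/ffunP => U; rewrite !ffunE -sumrB; apply: eq_bigr => S _.
rewrite -sumrB; apply: eq_bigr => T _; rewrite !ffunE.
by case: ifP => _; rewrite ?subr0 // mulrBr mulrBl.
Qed.

Lemma wedgeDl x y b : wedge (x + y) b = wedge x b + wedge y b.
Proof.
apply/ffunP => U; rewrite !ffunE -big_split; apply: eq_bigr => S _.
rewrite -big_split; apply: eq_bigr => T _; rewrite !ffunE.
by case: ifP => _ /=; rewrite ?addr0 // -mulrDl -mulrDr.
Qed.

Lemma wedge0l b : wedge 0 b = 0.
Proof.
apply/ffunP => U; rewrite !ffunE big1 // => S _; rewrite big1 // => T _.
by rewrite !ffunE; case: ifP => _; rewrite ?mulr0 ?mul0r.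
Qed.

Lemma wedgeZl c x b : wedge (scal c x) b = scal c (wedge x b).
Proof.
apply/ffunP => U; rewrite !ffunE mulr_sumr; apply: eq_bigr => S _.
rewrite mulr_sumr; apply: eq_bigr => T _; rewrite !ffunE.
by case: ifP => _; rewrite ?mulr0 // !mulrA [_ * c]mulrC.
Qed.

Lemma T1 a U : wedge (ev R n.*2 0) (restr [set o0] a) U =
  if (o0 \in U) && (o1 \notin U) then a U else 0.
Proof.
rewrite (ev_chi (lt2 n_gt0)) wedge_chi sub1set ffunE avE !in_setD1 eqxx /=.
case: (boolP (o0 \in U)) => h0 //=; case: (boolP (o1 \in U)) => h1 //=.
  by rewrite mulr0.
rewrite setD1K // wsgn1 ?mul1r // => s t; rewrite in_set1 => /eqP -> _.
by [].
Qed.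

Lemma T2 a U : wedge (ev R n.*2 1) (restr [set o1] a) U =
  if (o1 \in U) && (o0 \notin U) then a U else 0.
Proof.
rewrite (ev_chi (lt2S n_gt0)) wedge_chi sub1set ffunE avE !in_setD1 eqxx /=.
case: (boolP (o1 \in U)) => h1 //=; case: (boolP (o0 \in U)) => h0 //=.
  by rewrite mulr0.
rewrite setD1K // wsgn1 ?mul1r // => s t; rewrite in_set1 => /eqP -> tU.
apply/negP => /= t1; have tE : t = o0 by apply/val_inj => /=; lia.
by move: tU; rewrite tE in_setD1 (negbTE h0) andbF.
Qed.

Lemma T3 a U : wedge (e2 R n 0 1) (restr P0 a) U =
  if (o0 \in U) && (o1 \in U) then a U else 0.
Proof.
rewrite (e2_chi (lt2 n_gt0) (lt2S n_gt0)) // -P0E wedge_chi ffunE.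
have -> : (P0 \subset U) = (o0 \in U) && (o1 \in U) by rewrite P0E sub2.
case: ifP => // hs.
have hs' : P0 \subset U by rewrite P0E sub2.
have -> : av (U :\: P0) by rewrite avE !in_setD !inP0.
rewrite setUDS // wsgn1 ?mul1r // => s t; rewrite inP0 in_setD inP0 => s2 /andP[t2 _].
by rewrite -leqNgt; apply: leq_trans (ltnW s2) _; rewrite leqNgt.
Qed.

Lemma T4 a U : restr set0 a U = if (o0 \notin U) && (o1 \notin U) then a U else 0.
Proof. by rewrite ffunE avE set0U. Qed.


Lemma scalE (c : R) (x : form) U : scal c x U = c * x U. Proof. by rewrite ffunE. Qed.

Lemma wedge_suml (r : seq nat) (P : pred nat) (F : nat -> form) b :
  wedge (\sum_(j <- r | P j) F j) b = \sum_(j <- r | P j) wedge (F j) b.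
Proof. by apply: (big_morph (fun x => wedge x b)) => [x y|]; rewrite ?wedgeDl ?wedge0l. Qed.

Lemma sum1n (V : nmodType) (F : nat -> V) : \sum_(1 <= j < n) F j = \sum_(j < n | j != j0) F j.
Proof.
rewrite (eq_bigl (fun j : 'I_n => (j : nat) != 0%N)) => [|j]; last by rewrite -val_eqE.
rewrite -(big_mkord (fun j => j != 0%N) F) big_ltn_cond //= big_nat_cond [RHS]big_nat_cond.
by apply: eq_bigl => -[|j] //=; rewrite andbT.
Qed.

Lemma half_aux (s t j : nat) : s./2 = j -> (t./2 != j)%N -> (t < s)%N = (t < j.*2)%N.
Proof.
move=> <- /eqP h; have := odd_double_half s; have := odd_double_half t.
rewrite -!muln2; case: (odd s); case: (odd t) => /= e1 e2; apply/idP/idP => h1; lia.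
Qed.

Lemma wsgnPp j T (hj : (j < n)%N) : [disjoint Pp j & T] -> wsgn R (Pp j) T = 1.
Proof.
move=> d; rewrite /wsgn (_ : [set p | _] = setX (Pp j) [set t in T | (t < j.*2)%N]).
  rewrite cardsX (Pp2 hj) cards2 (_ : _ != _) ?mul2n; last by rewrite -val_eqE /= neq_ltn ltnSn.
  by rewrite -addnn exprD -expr2 sqrr_sign.
apply/setP => -[s t]; rewrite !inE /=.
case: (boolP (t \in T)) => tT /=; last by rewrite andbF.
have tP : t \notin Pp j by apply/negP => tP; apply: (disjP d tP tT).
move: tP; rewrite inE; case: (boolP (s./2 == j)%N) => // /eqP sj tj /=.
exact: half_aux.
Qed.


Definition Om : form := \sum_(1 <= j < n) e2 R n j.*2 j.*2.+1.

Lemma wedge_e2 j (hj : (j < n)%N) a U :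
  wedge (e2 R n j.*2 j.*2.+1) a U = if Pp j \subset U then a (U :\: Pp j) else 0.
Proof.
rewrite (e2_chi (lt2 hj) (lt2S hj)) ?ltnSn // -(Pp2 hj) wedge_chi.
by case: ifP => // _; rewrite wsgnPp ?mul1r //; apply: disjDself.
Qed.

Lemma wedgeOm a U : wedge Om a U =
  \sum_(j < n | j != j0) (if Pp j \subset U then a (U :\: Pp j) else 0).
Proof.
rewrite /Om wedge_suml sum_ffunE sum1n; apply: eq_bigr => j _.
by rewrite (wedge_e2 (ltn_ord j)).
Qed.

Lemma perI a (La : Lam a = 0) W (i : 'I_n) :
  \sum_(j < n) (if [disjoint Pp j & W] then
      (if Pp i \subset Pp j :|: W then a ((Pp j :|: W) :\: Pp i) else 0) else 0)
  = (([disjoint Pp i & W] : nat)%:R - ((Pp i \subset W) : nat)%:R) * a W.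
Proof.
have Pne : forall j : 'I_n, j != i -> [disjoint Pp i & Pp j].
  by move=> j ji; apply: disjPp; rewrite eq_sym val_eqE.
rewrite (bigD1 i) //= subsetUl.
have xi : Ordinal (lt2 (ltn_ord i)) \in Pp i by rewrite (Pp2 (ltn_ord i)) !inE eqxx.
case: (boolP (Pp i \subset W)) => hs.
  have hd : [disjoint Pp i & W] = false by apply: ndisj xi (subsetP hs _ xi).
  rewrite hd /= add0r sub0r mulN1r.
  have := congr1 (fun f : form => f (W :\: Pp i)) La.
  rewrite LamE ffunE (bigD1 i) //= disjDself setUDS // => /eqP.
  rewrite addrC addr_eq0 => /eqP <-; apply: eq_bigr => j ji.
  by rewrite (disjSr _ (Pne j ji)) hs (disjDU _ (Pne j ji)) (disjD _ (Pne j ji)).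
rewrite big1 => [|j ji]; last by rewrite (disjSr _ (Pne j ji)) (negbTE hs) !if_same.
rewrite addr0 subr0; case: ifP => hd; first by rewrite UDK // mul1r.
by rewrite mul0r.
Qed.

Lemma LamWo a (La : Lam a = 0) W : Lam (wedge Om a) W =
  (\sum_(i < n | i != j0) (([disjoint Pp i & W] : nat)%:R - ((Pp i \subset W) : nat)%:R)) * a W.
Proof.
rewrite LamE mulr_suml.
rewrite (eq_bigr (fun j : 'I_n => \sum_(i < n | i != j0) (if [disjoint Pp j & W] then
      (if Pp i \subset Pp j :|: W then a ((Pp j :|: W) :\: Pp i) else 0) else 0))); last first.
  by move=> j _; rewrite wedgeOm; case: ifP => _ //; rewrite big1.
by rewrite exchange_big; apply: eq_bigr => i _; apply: perI.
Qed.

Lemma halfP (x : 'I_(n.*2)) : (x./2 < n)%N.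
Proof. by rewrite ltn_half_double. Qed.

Lemma card2I (x y : 'I_(n.*2)) W : x != y -> #|[set x; y] :&: W| = ((x \in W) + (y \in W))%N.
Proof.
move=> xy; rewrite setIUl cardsU.
have -> : [set x] :&: W :&: ([set y] :&: W) = set0.
  apply/setP => z; rewrite !inE; apply/negP => /andP[/andP[/eqP -> _] /andP[/eqP e _]].
  by move: xy; rewrite e eqxx.
rewrite cards0 subn0; congr (_ + _)%N.
  case: (boolP (x \in W)) => h /=.
    by rewrite (setIidPl _) ?cards1 // sub1set.
  by rewrite (_ : _ :&: _ = set0) ?cards0 //; apply/setP => z; rewrite !inE;
     apply/negP => /andP[/eqP -> ]; rewrite (negbTE h).
case: (boolP (y \in W)) => h /=.
  by rewrite (setIidPl _) ?cards1 // sub1set.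
by rewrite (_ : _ :&: _ = set0) ?cards0 //; apply/setP => z; rewrite !inE;
   apply/negP => /andP[/eqP -> ]; rewrite (negbTE h).
Qed.

Lemma card_pairs W : (\sum_(i < n) #|Pp i :&: W|)%N = #|W|.
Proof.
rewrite -sum1_card (partition_big (fun x : 'I_(n.*2) => Ordinal (halfP x)) xpredT) //=.
apply: eq_bigr => i _; rewrite sum1dep_card; apply: eq_card => x.
by rewrite !inE -val_eqE /= andbC.
Qed.

Lemma pair_term W (i : 'I_n) : ((([disjoint Pp i & W] : nat)%:R : R) - ((Pp i \subset W) : nat)%:R)
  = 1 - #|Pp i :&: W|%:R.
Proof.
have ne : Ordinal (lt2 (ltn_ord i)) != Ordinal (lt2S (ltn_ord i)) by rewrite -val_eqE /= neq_ltn ltnSn.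
rewrite (Pp2 (ltn_ord i)) disj2 sub2 card2I //.
by case: (_ \in W); case: (_ \in W) => /=; rewrite ?natrD ?mulr0n ?mulr1n; ring.
Qed.

Lemma count_pairs W : \sum_(i < n) ((([disjoint Pp i & W] : nat)%:R : R) - ((Pp i \subset W) : nat)%:R)
  = n%:R - #|W|%:R.
Proof.
rewrite (eq_bigr _ (fun i _ => pair_term W i)) sumrB -natr_sum card_pairs; congr (_ - _).
by rewrite -(big_mkord xpredT (fun _ => (1:R))) sumr_const_nat subn0.
Qed.


Lemma count_pairs1 W : av W ->
  \sum_(i < n | i != j0) ((([disjoint Pp i & W] : nat)%:R : R) - ((Pp i \subset W) : nat)%:R)
  = n%:R - 1 - #|W|%:R.
Proof.
move=> hW; have := count_pairs W; rewrite (bigD1 j0) //= av_disj //.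
have -> : (P0 \subset W) = false.
  by apply/negbTE/negP => /subsetP /(_ o0); rewrite inP0 => /(_ isT); move: hW; rewrite avE => /andP[/negbTE ->].
move=> e; apply: (@addrI _ (true%:R - false%:R)); rewrite e /=; ring.
Qed.

Lemma LamDZ x y (c : R) W : Lam (x + scal c y) W = Lam x W + c * Lam y W.
Proof.
rewrite !LamE mulr_sumr -big_split; apply: eq_bigr => j _.
by rewrite /= ffunDE scalE; case: ifP => _; rewrite ?mulr0 ?addr0.
Qed.

Lemma neqP2 i (hi : (i < n)%N) : Ordinal (lt2 hi) != Ordinal (lt2S hi).
Proof. by rewrite -val_eqE /= neq_ltn ltnSn. Qed.

Lemma cardPp j : (j < n)%N -> #|Pp j| = 2.
Proof. by move=> hj; rewrite (Pp2 hj) cards2 neqP2. Qed.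

Lemma main_sec (k : nat) (mu : form) :
  (k <= n)%N ->
  primitive k%:Z mu ->
  exists b1 b2 b3 b4 : extform R n.*2,
    [/\ primitive (k%:Z - 1) b1, primitive (k%:Z - 1) b2,
        primitive (k%:Z - 2) b3, primitive k%:Z b4
      & [/\ avoids12 b1, avoids12 b2, avoids12 b3, avoids12 b4 &
        mu = wedge (ev R n.*2 0) b1 + wedge (ev R n.*2 1) b2
             + wedge (e2 R n 0 1
                      - scal ((n - k).+1%:R)^-1 (\sum_(1 <= j < n) e2 R n j.*2 j.*2.+1))
                     b3
             + b4]].
Proof.
move=> hk [hom Lmu].
set a3 := restr P0 mu.
set c : R := ((n - k).+1%:R)^-1.
have o0P : o0 \in P0 by rewrite inP0.
have o1P : o1 \in P0 by rewrite inP0.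
have ne : o0 != o1 by rewrite -val_eqE.
have hom3 : homog (k%:Z - 2) a3.
  by apply: homog_restr hom (subxx _) _; rewrite P0E cards2 ne /=; ring.
have La3 : Lam a3 = 0 by apply: (Lam_restr Lmu o0P (subxx _)).
exists (restr [set o0] mu), (restr [set o1] mu), a3, (restr set0 mu + scal c (wedge Om a3)).
split.
- split; last by apply: (Lam_restr Lmu (set11 o0)); rewrite sub1set.
  by apply: homog_restr hom _ _; rewrite ?sub1set // cards1 /=; ring.
- split; last by apply: (Lam_restr Lmu (set11 o1)); rewrite sub1set.
  by apply: homog_restr hom _ _; rewrite ?sub1set // cards1 /=; ring.
- by split.
- split.
    move=> S hS; rewrite ffunDE scalE.
    rewrite (homog_restr (e := k%:Z) hom (sub0set _)) ?cards0 ?addr0 // add0r.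
    rewrite wedgeOm big1 ?mulr0 // => j _; case: ifP => // hj; apply: hom3.
    rewrite cardsD (setIidPr hj) (cardPp (ltn_ord j)).
    have := subset_leq_card hj; rewrite (cardPp (ltn_ord j)).
    by move: hS => /eqP hS hle; apply/eqP => e; apply: hS; lia.
  apply/ffunP => W; rewrite LamDZ (Lam_restr0 _ Lmu) (LamWo La3) [RHS]ffunE.
  case: (boolP (a3 W == 0)) => [/eqP ->|h]; first by rewrite oppr0 !mulr0 addr0.
  have hav : av W by move: h; rewrite ffunE; case: ifP => //; rewrite eqxx.
  have hW : #|W|%:Z = k%:Z - 2 by apply/eqP; apply: contraNT h => /hom3 ->.
  rewrite count_pairs1 //.
  have -> : (n%:R : R) = ((n - k).+1 + 1 + #|W|)%N%:R by congr (_%:R); lia.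
  rewrite !natrD (_ : (n - k).+1%:R + 1%:R + #|W|%:R - 1 - #|W|%:R = (n - k).+1%:R :> R); last by ring.
  by rewrite mulrA mulVf ?mul1r ?addNr // pnatr_eq0.
split; try exact: avoids_restr.
  move=> S hS; rewrite ffunDE scalE (avoids_restr set0 mu hS) add0r wedgeOm big1 ?mulr0 // => j nj.
  case: ifP => // _; apply: avoids_restr.
  have nj0 : (nat_of_ord j) != 0%N by [].
  case/existsP: hS => x /andP[xS x2]; apply/existsP; exists x.
  by rewrite in_setD (notin_Pp x2 nj0) xS x2.
rewrite wedgeBl wedgeZl -/Om; apply/ffunP => U.
rewrite !ffunDE ?ffunNE !scalE T1 T2 T3 T4.
by case: (boolP (o0 \in U)) => _; case: (boolP (o1 \in U)) => _ /=; ring.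
Qed.

End Pf.

Theorem lemma2p3 (R : realType) (n k : nat) (mu : extform R n.*2) :
  (0 < n)%N -> (k <= n)%N ->
  primitive k%:Z mu ->
  exists b1 b2 b3 b4 : extform R n.*2,
    [/\ primitive (k%:Z - 1) b1, primitive (k%:Z - 1) b2,
        primitive (k%:Z - 2) b3, primitive k%:Z b4
      & [/\ avoids12 b1, avoids12 b2, avoids12 b3, avoids12 b4 &
        mu = wedge (ev R n.*2 0) b1 + wedge (ev R n.*2 1) b2
             + wedge (e2 R n 0 1
                      - scal ((n - k).+1%:R)^-1 (\sum_(1 <= j < n) e2 R n j.*2 j.*2.+1))
                     b3
             + b4]].
Proof. by move=> hn; apply: main_sec. Qed.
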